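(* Let $m\in\mathbb{N}$ and let $H_m$ be the graph described in the context, with the geodesic-biased random walk with target $b$ and excited set $\mathcal{X}=\{a,s_1,\dots,s_m\}$. Writing $T(v_1,b)$ for the expected first hitting time of $b$ by this walk started at $v_1$, we have \[T(v_1,b)\ \ge\ \frac{\exp(\sqrt{m}/10)}{m^{3/2}+1}.\]
   Context: Geodesic-biased random walk: let $G$ be a finite connected graph, $b\in V(G)$ a target vertex and $\mathcal{X}\subseteq V(G)$ a set of excited vertices. For every vertex $x\neq b$ fix in advance one shortest path in $G$ from $x$ to $b$. From an unexcited vertex the walker moves to a uniformly random neighbour; from an excited vertex she moves to the next vertex on the fixed shortest path to $b$. The graph $H_m$ ($m\in\mathbb{N}$) has vertex set $\{a,b\}\cup\{v_1,\dots,v_m\}\cup\{s_1,\dots,s_m\}\cup\{r_{i,j}: i\in[m],\ j\in[2m+1]\}$ (so $2+m(2m+3)$ vertices) and edges: the path $a,v_1,v_2,\dots,v_m,b$; the path $a,s_1,s_2,\dots,s_m$; and for each $i\in[m]$ the path $s_i,r_{i,1},r_{i,2},\dots,r_{i,2m+1},v_i$ (of length $2m+2$). Its maximum degree is $3$. In $H_m$ the unique shortest path from $s_i$ to $b$ goes $s_i,s_{i-1},\dots,s_1,a,v_1,\dots,v_m,b$, so with these excitations the walker moves deterministically from $s_i$ to $s_{i-1}$ (from $s_1$ to $a$) and from $a$ to $v_1$. *)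

(* Defs.v *)
From Stdlib Require Import Reals Lra Lia Arith List Bool.
Import ListNotations.
Open Scope R_scope.

(* Vertices of H_m: a, b, v_i, s_i, r_{i,j} (indices are 1-based, validity
   w.r.t. m is given by membership in [verts m]). *)
Inductive vtx : Type :=
| Va | Vb | Vv (i : nat) | Vs (i : nat) | Vr (i j : nat).

Definition veqb (x y : vtx) : bool :=
  match x, y with
  | Va, Va => true
  | Vb, Vb => true
  | Vv i, Vv i' => Nat.eqb i i'
  | Vs i, Vs i' => Nat.eqb i i'
  | Vr i j, Vr i' j' => Nat.eqb i i' && Nat.eqb j j'
  | _, _ => false
  end.

Fixpoint path_edges (p : list vtx) : list (vtx * vtx) :=
  match p with
  | x :: ((y :: _) as q) => (x, y) :: path_edges q
  | _ => []
  end.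

Definition pathV (m : nat) : list vtx := Va :: map Vv (seq 1 m) ++ [Vb].
Definition pathS (m : nat) : list vtx := Va :: map Vs (seq 1 m).
Definition pathR (m i : nat) : list vtx :=
  Vs i :: map (Vr i) (seq 1 (2 * m + 1)) ++ [Vv i].

Definition edges (m : nat) : list (vtx * vtx) :=
  path_edges (pathV m) ++ path_edges (pathS m)
  ++ flat_map (fun i => path_edges (pathR m i)) (seq 1 m).

Definition verts (m : nat) : list vtx :=
  Va :: Vb :: map Vv (seq 1 m) ++ map Vs (seq 1 m)
  ++ flat_map (fun i => map (Vr i) (seq 1 (2 * m + 1))) (seq 1 m).

Definition adjb (m : nat) (x y : vtx) : bool :=
  existsb (fun e => (veqb (fst e) x && veqb (snd e) y)
                    || (veqb (fst e) y && veqb (snd e) x)) (edges m).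

Definition nbrs (m : nat) (x : vtx) : list vtx := filter (adjb m x) (verts m).

Inductive walk (m : nat) : vtx -> vtx -> nat -> Prop :=
| walk0 x : walk m x x 0
| walkS x y z k : adjb m x y = true -> walk m y z k -> walk m x z (S k).

(* y is the vertex following x on some shortest path from x to b:
   y is a neighbour of x and dist(y,b) < dist(x,b). *)
Definition geodesic_step (m : nat) (x y : vtx) : Prop :=
  adjb m x y = true /\
  forall k, walk m x Vb k -> exists k', walk m y Vb k' /\ (k' < k)%nat.

Definition excited (x : vtx) : bool :=
  match x with Va | Vs _ => true | _ => false end.

(* transition probability of the geodesic-biased walk; [nxt x] is the
   next vertex on the fixed shortest path from x to b *)
Definition trans (m : nat) (nxt : vtx -> vtx) (x y : vtx) : R :=
  if excited x then (if veqb (nxt x) y then 1 else 0)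
  else (if adjb m x y then / INR (length (nbrs m x)) else 0).

Definition sumR (l : list R) : R := fold_right Rplus 0 l.

(* killed[n] y = P_{v_1}(X_n = y and b not visited at times 0..n-1) *)
Fixpoint killed (m : nat) (nxt : vtx -> vtx) (n : nat) (y : vtx) : R :=
  match n with
  | O => if veqb y (Vv 1) then 1 else 0
  | S n' => sumR (map (fun x => killed m nxt n' x * trans m nxt x y)
                      (filter (fun x => negb (veqb x Vb)) (verts m)))
  end.

Definition hit_prob (m : nat) (nxt : vtx -> vtx) (n : nat) : R :=
  killed m nxt n Vb.

Definition hit_partial (m : nat) (nxt : vtx -> vtx) (N : nat) : R :=
  sum_f_R0 (fun n => INR n * hit_prob m nxt n) N.

(* E[T_b] >= c, with E[T_b] in [0, +oo] the supremum of the partial sums *)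
Definition hitting_time_ge (m : nat) (nxt : vtx -> vtx) (c : R) : Prop :=
  forall c', c' < c -> exists N, c' < hit_partial m nxt N.

(* Main.v *)
Require Import Defs.
From Stdlib Require Import Reals Lra Lia Arith List Bool Permutation.
Import ListNotations.
Open Scope R_scope.

Lemma veqb_eq x y : veqb x y = true <-> x = y.
Proof.
  destruct x, y; simpl; split; intro H; try discriminate; try congruence;
  repeat match goal with
  | H : (_ && _)%bool = true |- _ => apply andb_true_iff in H; destruct H
  | H : Nat.eqb _ _ = true |- _ => apply Nat.eqb_eq in H
  | H : Vv _ = Vv _ |- _ => injection H; clear H; intros
  | H : Vs _ = Vs _ |- _ => injection H; clear H; intros
  | H : Vr _ _ = Vr _ _ |- _ => injection H; clear H; intros
  end; subst; try reflexivity;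
  try apply Nat.eqb_refl; try (apply andb_true_iff; split; apply Nat.eqb_refl).
Qed.

Lemma veqb_refl x : veqb x x = true.
Proof. apply veqb_eq; reflexivity. Qed.

Definition Valid (m:nat) (y:vtx) : Prop :=
  match y with
  | Va | Vb => True
  | Vv i | Vs i => (1 <= i <= m)%nat
  | Vr i j => (1 <= i <= m)%nat /\ (1 <= j <= 2*m+1)%nat
  end.

Lemma in_verts m y : In y (verts m) <-> Valid m y.
Proof.
  unfold verts. simpl. rewrite !in_app_iff, !in_map_iff, in_flat_map.
  destruct y; simpl; split; intro H.
  - auto.
  - left; reflexivity.
  - auto.
  - right; left; reflexivity.
  - destruct H as [H|[H|[[x [Hx Hi]]|[[x [Hx Hi]]|[x [Hx Hi]]]]]]; try discriminate.
    + injection Hx; intros; subst. apply in_seq in Hi. lia.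
    + apply in_map_iff in Hi. destruct Hi as [? [? _]]. discriminate.
  - right; right; left. exists i. split; [reflexivity|]. apply in_seq. lia.
  - destruct H as [H|[H|[[x [Hx Hi]]|[[x [Hx Hi]]|[x [Hx Hi]]]]]]; try discriminate.
    + injection Hx; intros; subst. apply in_seq in Hi. lia.
    + apply in_map_iff in Hi. destruct Hi as [? [? _]]. discriminate.
  - right; right; right; left. exists i. split; [reflexivity|]. apply in_seq. lia.
  - destruct H as [H|[H|[[x [Hx Hi]]|[[x [Hx Hi]]|[x [Hx Hi]]]]]]; try discriminate.
    apply in_map_iff in Hi. destruct Hi as [k [Hk Hk2]]. injection Hk; intros; subst.
    apply in_seq in Hx. apply in_seq in Hk2. lia.
  - right; right; right; right. exists i. split; [apply in_seq; lia|].
    apply in_map_iff. exists j. split; [reflexivity|]. apply in_seq. lia.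
Qed.

Lemma NoDup_flat_map_aux {A B} (f : A -> list B) (l : list A) :
  NoDup l -> (forall x, NoDup (f x)) ->
  (forall x y z, In x l -> In y l -> x <> y -> In z (f x) -> ~ In z (f y)) ->
  NoDup (flat_map f l).
Proof.
  induction l as [|a l IH]; simpl; intros Hl Hf Hd. constructor.
  inversion Hl; subst. apply NoDup_app; auto.
  - apply IH; auto. intros; apply (Hd x y z); auto.
  - intros z Hz Hz2. apply in_flat_map in Hz2. destruct Hz2 as [y [Hy Hzy]].
    apply (Hd a y z); auto. intro; subst; auto.
Qed.

Lemma verts_NoDup m : NoDup (verts m).
Proof.
  unfold verts.
  assert (Hr : NoDup (map Vv (seq 1 m) ++ map Vs (seq 1 m) ++
     flat_map (fun i => map (Vr i) (seq 1 (2 * m + 1))) (seq 1 m))).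
  { apply NoDup_app; [| apply NoDup_app |].
    - apply FinFun.Injective_map_NoDup; [intros a b H; congruence|apply seq_NoDup].
    - apply FinFun.Injective_map_NoDup; [intros a b H; congruence|apply seq_NoDup].
    - apply NoDup_flat_map_aux; [apply seq_NoDup| |].
      + intro; apply FinFun.Injective_map_NoDup; [intros a b H; congruence|apply seq_NoDup].
      + intros x y z _ _ Hxy Hx Hy. apply in_map_iff in Hx, Hy.
        destruct Hx as [? [Hx _]], Hy as [? [Hy _]]. subst. congruence.
    - intros a Ha Hb. apply in_map_iff in Ha. destruct Ha as [? [Ha _]]; subst.
      apply in_flat_map in Hb. destruct Hb as [? [_ Hb]]. apply in_map_iff in Hb.
      destruct Hb as [? [Hb _]]; discriminate.
    - intros a Ha Hb. apply in_map_iff in Ha. destruct Ha as [? [Ha _]]; subst.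
      apply in_app_iff in Hb. destruct Hb as [Hb|Hb].
      + apply in_map_iff in Hb. destruct Hb as [? [Hb _]]; discriminate.
      + apply in_flat_map in Hb. destruct Hb as [? [_ Hb]]. apply in_map_iff in Hb.
        destruct Hb as [? [Hb _]]; discriminate. }
  constructor; [|constructor; auto].
  - simpl. intros [H|H]; [discriminate|].
    rewrite !in_app_iff, !in_map_iff, in_flat_map in H.
    destruct H as [[? [H _]]|[[? [H _]]|[? [_ H]]]]; try discriminate.
    apply in_map_iff in H. destruct H as [? [H _]]; discriminate.
  - rewrite !in_app_iff, !in_map_iff, in_flat_map. intro H.
    destruct H as [[? [H _]]|[[? [H _]]|[? [_ H]]]]; try discriminate.
    apply in_map_iff in H. destruct H as [? [H _]]; discriminate.
Qed.
Lemma path_edges_map (F : nat -> vtx) n k u w :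
  In (u,w) (path_edges (map F (seq k n))) <->
  exists t, (k <= t /\ S t < k + n)%nat /\ u = F t /\ w = F (S t).
Proof.
  revert k. induction n as [|n IH]; intro k.
  - simpl. split; [tauto|]. intros [t [Ht _]]; lia.
  - destruct n as [|n].
    + simpl. split; [tauto|]. intros [t [Ht _]]; lia.
    + assert (E : path_edges (map F (seq k (S (S n)))) =
              (F k, F (S k)) :: path_edges (map F (seq (S k) (S n)))) by reflexivity.
      rewrite E.
      transitivity ((F k, F (S k)) = (u,w) \/ In (u,w) (path_edges (map F (seq (S k) (S n))))).
      { reflexivity. }
      rewrite IH. split.
      * intros [H|[t [Ht [Hu Hw]]]].
        -- injection H; intros; subst. exists k. split; [lia|auto].
        -- exists t. split; [lia|auto].
      * intros [t [Ht [Hu Hw]]]. destruct (Nat.eq_dec t k).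
        -- subst. left. reflexivity.
        -- right. exists t. split; [lia|auto].
Qed.

Definition FV (m t : nat) : vtx := if Nat.eqb t 0 then Va else if Nat.leb t m then Vv t else Vb.
Definition FS (t : nat) : vtx := if Nat.eqb t 0 then Va else Vs t.
Definition FR (m i t : nat) : vtx :=
  if Nat.eqb t 0 then Vs i else if Nat.leb t (2*m+1) then Vr i t else Vv i.

Lemma pathV_eq m : pathV m = map (FV m) (seq 0 (m+2)).
Proof.
  unfold pathV. replace (m+2)%nat with (S (m+1))%nat by lia. simpl.
  rewrite Nat.add_1_r, seq_S, map_app. simpl. f_equal. f_equal.
  - apply map_ext_in. intros a Ha. apply in_seq in Ha. unfold FV.
    destruct (Nat.eqb_spec a 0); [lia|]. destruct (Nat.leb_spec a m); [auto|lia].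
  - unfold FV. destruct (Nat.eqb_spec (S m) 0); [lia|]. destruct (Nat.leb_spec (S m) m); [lia|auto].
Qed.

Lemma pathS_eq m : pathS m = map FS (seq 0 (m+1)).
Proof.
  unfold pathS. rewrite Nat.add_1_r. simpl. f_equal.
  apply map_ext_in. intros a Ha. apply in_seq in Ha. unfold FS.
  destruct (Nat.eqb_spec a 0); [lia|auto].
Qed.

Lemma pathR_eq m i : pathR m i = map (FR m i) (seq 0 (2*m+3)).
Proof.
  unfold pathR. replace (2*m+3)%nat with (S (S (2*m+1)))%nat by lia.
  change (seq 0 (S (S (2*m+1)))) with (0%nat :: seq 1 (S (2*m+1))).
  rewrite seq_S, map_cons, map_app. f_equal. f_equal.
  - apply map_ext_in. intros a Ha. apply in_seq in Ha. unfold FR.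
    destruct (Nat.eqb_spec a 0); [lia|]. destruct (Nat.leb_spec a (2*m+1)); [auto|lia].
  - cbn [map]. f_equal. unfold FR. destruct (Nat.eqb_spec (1 + (2*m+1)) 0); [lia|].
    destruct (Nat.leb_spec (1 + (2*m+1)) (2*m+1)); [lia|auto].
Qed.

Definition EdgeD (m:nat) (u w : vtx) : Prop :=
  (exists t, (t < m+1)%nat /\ u = FV m t /\ w = FV m (S t)) \/
  (exists t, (t < m)%nat /\ u = FS t /\ w = FS (S t)) \/
  (exists i t, (1 <= i <= m)%nat /\ (t < 2*m+2)%nat /\ u = FR m i t /\ w = FR m i (S t)).

Lemma in_edges m u w : In (u,w) (edges m) <-> EdgeD m u w.
Proof.
  unfold edges, EdgeD. rewrite !in_app_iff, in_flat_map, pathV_eq, pathS_eq, !path_edges_map.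
  split.
  - intros [[t [Ht H]]|[[t [Ht H]]|[i [Hi Hp]]]].
    + left. exists t. split; [lia|auto].
    + right; left. exists t. split; [lia|auto].
    + right; right. apply in_seq in Hi. rewrite pathR_eq, path_edges_map in Hp.
      destruct Hp as [t [Ht H]]. exists i, t. split; [lia|]. split; [lia|auto].
  - intros [[t [Ht H]]|[[t [Ht H]]|[i [t [Hi [Ht H]]]]]].
    + left. exists t. split; [lia|auto].
    + right; left. exists t. split; [lia|auto].
    + right; right. exists i. split; [apply in_seq; lia|].
      rewrite pathR_eq, path_edges_map. exists t. split; [lia|auto].
Qed.
Definition Adj (m:nat) (x y:vtx) : Prop :=
 match x, y with
 | Va, Vv i | Vv i, Va => i = 1%nat /\ (1 <= m)%nat
 | Va, Vs i | Vs i, Va => i = 1%nat /\ (1 <= m)%nat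
 | Vv i, Vb | Vb, Vv i => i = m /\ (1 <= m)%nat
 | Vv i, Vv j | Vs i, Vs j => (1 <= i <= m /\ 1 <= j <= m /\ (j = S i \/ i = S j))%nat
 | Vs i, Vr k j | Vr k j, Vs i => k = i /\ (1 <= i <= m)%nat /\ j = 1%nat
 | Vr k j, Vv i | Vv i, Vr k j => k = i /\ (1 <= i <= m)%nat /\ j = (2*m+1)%nat
 | Vr i j, Vr i' j' => i = i' /\ (1 <= i <= m /\ 1 <= j <= 2*m+1 /\ 1 <= j' <= 2*m+1 /\ (j' = S j \/ j = S j'))%nat
 | _, _ => False
 end.

Ltac dspec := repeat match goal with
 | |- context [Nat.eqb ?a ?b] => destruct (Nat.eqb_spec a b)
 | |- context [Nat.leb ?a ?b] => destruct (Nat.leb_spec a b)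
 end.

Lemma Adj_sym m x y : Adj m x y -> Adj m y x.
Proof. destruct x, y; simpl; intuition lia. Qed.

Lemma EdgeD_Adj m u w : (1 <= m)%nat -> EdgeD m u w -> Adj m u w.
Proof.
  intros Hm [[t [Ht [-> ->]]]|[[t [Ht [-> ->]]]|[i [t [Hi [Ht [-> ->]]]]]]];
  unfold FV, FS, FR; dspec; simpl; lia.
Qed.

Ltac finw := repeat split; unfold FV, FS, FR; dspec; try lia; repeat split; try (f_equal; lia); try lia.

Lemma Adj_EdgeD m x y : Adj m x y -> EdgeD m x y \/ EdgeD m y x.
Proof.
  unfold EdgeD.
  destruct x, y; simpl; intro H; try contradiction.
  - left; left; exists 0%nat; finw.
  - left; right; left; exists 0%nat; finw.
  - right; left; exists m; finw.
  - right; left; exists 0%nat; finw.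
  - left; left; exists m; finw.
  - destruct H as [H1 [H2 [H3|H3]]].
    + left; left; exists i; finw.
    + right; left; exists i0; finw.
  - right; right; right; match goal with |- context [Vr ?a _] => exists a end; exists (2*m+1)%nat; finw.
  - right; right; left; exists 0%nat; finw.
  - destruct H as [H1 [H2 [H3|H3]]].
    + left; right; left; exists i; finw.
    + right; right; left; exists i0; finw.
  - left; right; right; match goal with |- context [Vr ?a _] => exists a end; exists 0%nat; finw.
  - left; right; right; match goal with |- context [Vr ?a _] => exists a end; exists (2*m+1)%nat; finw.
  - right; right; right; match goal with |- context [Vr ?a _] => exists a end; exists 0%nat; finw.
  - destruct H as [H1 [H2 [H3 [H4 [H5|H5]]]]]; subst.
    + left; right; right; match goal with |- context [Vr ?a ?b] => exists a; exists b end; finw.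
    + right; right; right; match goal with |- context [Vr ?a ?b] => exists a; exists b end; finw.
Qed.

Lemma adjb_Adj m x y : (1 <= m)%nat -> adjb m x y = true <-> Adj m x y.
Proof.
  intro Hm. unfold adjb. rewrite existsb_exists. split.
  - intros [[u w] [He Hb]]. simpl in Hb. apply in_edges in He.
    apply orb_true_iff in Hb. destruct Hb as [Hb|Hb]; apply andb_true_iff in Hb;
    destruct Hb as [H1 H2]; apply veqb_eq in H1; apply veqb_eq in H2; subst.
    + apply EdgeD_Adj; auto.
    + apply Adj_sym, EdgeD_Adj; auto.
  - intro H. destruct (Adj_EdgeD m x y H) as [He|He].
    + exists (x,y). split; [apply in_edges; auto|]. simpl. rewrite !veqb_refl. reflexivity.
    + exists (y,x). split; [apply in_edges; auto|]. simpl. rewrite !veqb_refl. apply orb_true_r.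
Qed.

Lemma sumR_app l1 l2 : sumR (l1 ++ l2) = sumR l1 + sumR l2.
Proof. induction l1; simpl; [ring|rewrite IHl1; ring]. Qed.

Lemma sumR_mult_l {A} (f : A -> R) c l :
  sumR (map (fun x => c * f x) l) = c * sumR (map f l).
Proof. induction l; simpl; [ring|rewrite IHl; ring]. Qed.

Lemma sumR_ext {A} (f g : A -> R) l :
  (forall x, In x l -> f x = g x) -> sumR (map f l) = sumR (map g l).
Proof. intro H. f_equal. apply map_ext_in. auto. Qed.

Lemma sumR_plus {A} (f g : A -> R) l :
  sumR (map (fun x => f x + g x) l) = sumR (map f l) + sumR (map g l).
Proof. induction l; simpl; [ring|rewrite IHl; ring]. Qed.

Lemma sumR_le {A} (f g : A -> R) l :
  (forall x, In x l -> f x <= g x) -> sumR (map f l) <= sumR (map g l).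
Proof.
  induction l; simpl; intro H; [lra|].
  apply Rplus_le_compat; auto.
Qed.

Lemma sumR_nonneg {A} (f : A -> R) l :
  (forall x, In x l -> 0 <= f x) -> 0 <= sumR (map f l).
Proof.
  intro H. replace 0 with (sumR (map (fun _ : A => 0) l)).
  - apply sumR_le; auto.
  - induction l; simpl; [ring|rewrite IHl; [ring|auto with datatypes]].
Qed.

Lemma sumR_swap {A B} (F : A -> B -> R) l1 l2 :
  sumR (map (fun y => sumR (map (fun x => F x y) l1)) l2) =
  sumR (map (fun x => sumR (map (fun y => F x y) l2)) l1).
Proof.
  induction l1; simpl.
  - induction l2; simpl; [ring|rewrite IHl2; ring].
  - rewrite sumR_plus, IHl1. reflexivity.
Qed.

Lemma sumR_perm {A} (f : A -> R) l l' : Permutation l l' -> sumR (map f l) = sumR (map f l').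
Proof. induction 1; simpl; try ring; try (rewrite IHPermutation; ring); congruence. Qed.

Lemma sumR_filter {A} (p : A -> bool) (f : A -> R) l :
  sumR (map (fun y => if p y then f y else 0) l) = sumR (map f (filter p l)).
Proof. induction l; simpl; [ring|]. destruct (p a); simpl; rewrite IHl; ring. Qed.

Lemma SL {A} (p : A -> bool) (f : A -> R) l s :
  NoDup l -> NoDup s -> (forall y, (In y l /\ p y = true) <-> In y s) ->
  sumR (map (fun y => if p y then f y else 0) l) = sumR (map f s) /\
  length (filter p l) = length s.
Proof.
  intros Hl Hs Hiff. rewrite sumR_filter.
  assert (P : Permutation (filter p l) s).
  { apply NoDup_Permutation; [apply NoDup_filter; auto|auto|].
    intro y. rewrite filter_In. apply Hiff. }
  split; [apply sumR_perm; auto|apply Permutation_length; auto].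
Qed.

Definition Pop (m:nat) (nxt : vtx -> vtx) (f : vtx -> R) (x : vtx) : R :=
  sumR (map (fun y => trans m nxt x y * f y) (verts m)).

Lemma Pop_unexc m nxt f x s : (1 <= m)%nat -> excited x = false -> NoDup s ->
  (forall y, In y (verts m) /\ Adj m x y <-> In y s) ->
  Pop m nxt f x = sumR (map f s) / INR (length s).
Proof.
  intros Hm Hx Hs Hiff. unfold Pop, trans. rewrite Hx.
  assert (Hiff' : forall y, In y (verts m) /\ adjb m x y = true <-> In y s).
  { intro y. rewrite adjb_Adj; auto. }
  destruct (SL (adjb m x) (fun y => / INR (length s) * f y) (verts m) s
     (verts_NoDup m) Hs Hiff') as [H1 H2].
  unfold nbrs. rewrite H2.
  rewrite (sumR_ext _ (fun y => if adjb m x y then / INR (length s) * f y else 0)).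
  - rewrite H1, sumR_mult_l. unfold Rdiv. ring.
  - intros y _. destruct (adjb m x y); ring.
Qed.

Lemma Pop_exc m nxt f x : excited x = true -> In (nxt x) (verts m) ->
  Pop m nxt f x = f (nxt x).
Proof.
  intros Hx Hin. unfold Pop, trans. rewrite Hx.
  rewrite (sumR_ext _ (fun y => if veqb (nxt x) y then f y else 0)).
  - destruct (SL (veqb (nxt x)) f (verts m) [nxt x] (verts_NoDup m)) as [H1 _].
    + constructor; [simpl; tauto|constructor].
    + intro y. rewrite veqb_eq. simpl. split; [intros [_ ->]; auto|intros [<-|[]]; auto].
    + rewrite H1. simpl. ring.
  - intros y _. destruct (veqb (nxt x) y); ring.
Qed.

Definition prevV (i:nat) : vtx := if Nat.eqb i 1 then Va else Vv (i-1).
Definition nextV (m i:nat) : vtx := if Nat.eqb i m then Vb else Vv (S i).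
Definition Nv (m i : nat) : list vtx := [prevV i; nextV m i; Vr i (2*m+1)].
Definition prevR (i j:nat) : vtx := if Nat.eqb j 1 then Vs i else Vr i (j-1).
Definition nextR (m i j:nat) : vtx := if Nat.eqb j (2*m+1) then Vv i else Vr i (S j).
Definition Nr (m i j : nat) : list vtx := [prevR i j; nextR m i j].

Ltac solve_hyps := repeat match goal with
 | H : _ /\ _ |- _ => destruct H
 | H : _ \/ _ |- _ => destruct H
 | H : False |- _ => contradiction
 | H : Vv _ = Vv _ |- _ => injection H; clear H; intro
 | H : Vs _ = Vs _ |- _ => injection H; clear H; intro
 | H : Vr _ _ = Vr _ _ |- _ => injection H; clear H; intros
 | H : ?a = ?b |- _ => discriminate H
 end.

Ltac solve_goal := first [ reflexivity | (f_equal; lia) | lia | (left; solve_goal) | (right; solve_goal)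
  | (split; solve_goal) ].

Lemma nbr_v m i y : (1 <= m)%nat -> (1 <= i <= m)%nat ->
  (In y (verts m) /\ Adj m (Vv i) y <-> In y (Nv m i)).
Proof.
  intros Hm Hi. rewrite in_verts. unfold Nv, prevV, nextV. simpl.
  dspec; destruct y; simpl; split; intro H; solve_hyps; subst; try solve_goal; try lia.
Qed.

Lemma nbr_r m i j y : (1 <= m)%nat -> (1 <= i <= m)%nat -> (1 <= j <= 2*m+1)%nat ->
  (In y (verts m) /\ Adj m (Vr i j) y <-> In y (Nr m i j)).
Proof.
  intros Hm Hi Hj. rewrite in_verts. unfold Nr, prevR, nextR. simpl.
  dspec; destruct y; simpl; split; intro H; solve_hyps; subst; try solve_goal; try lia.
Qed.

Lemma Nv_NoDup m i : (1 <= i <= m)%nat -> NoDup (Nv m i).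
Proof.
  intro Hi. unfold Nv, prevV, nextV.
  repeat constructor; simpl; dspec; intro H; solve_hyps; lia.
Qed.

Lemma Nr_NoDup m i j : (1 <= j <= 2*m+1)%nat -> NoDup (Nr m i j).
Proof.
  intro Hj. unfold Nr, prevR, nextR.
  repeat constructor; simpl; dspec; intro H; solve_hyps; lia.
Qed.

Lemma Adj_valid m x y : Adj m x y -> Valid m y.
Proof. destruct x, y; simpl; lia. Qed.

Definition D (m:nat) (x:vtx) : nat :=
  match x with
  | Va => m+1 | Vb => 0 | Vv i => m+1-i | Vs i => m+1+i
  | Vr i j => Nat.min (m+1+i+j) (3*m+3-i-j)
  end%nat.

Lemma D_lip m x y : Adj m x y -> (D m x <= D m y + 1)%nat.
Proof. destruct x, y; simpl; lia. Qed.

Lemma walk_D m x z k : (1 <= m)%nat -> walk m x z k -> z = Vb -> (D m x <= k)%nat.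
Proof.
  intros Hm W. induction W; intro Hz.
  - subst. simpl. lia.
  - apply adjb_Adj in H; auto. apply D_lip in H. specialize (IHW Hz). lia.
Qed.

Lemma adjT m x y : (1 <= m)%nat -> Adj m x y -> adjb m x y = true.
Proof. intros. apply adjb_Adj; auto. Qed.

Lemma walk_v m d : (1 <= m)%nat -> forall i, (1 <= i <= m)%nat -> (m - i = d)%nat ->
  walk m (Vv i) Vb (m+1-i).
Proof.
  intro Hm. induction d; intros i Hi Hd.
  - replace (m+1-i)%nat with 1%nat by lia. apply walkS with Vb; [|constructor].
    apply adjT; simpl; lia.
  - replace (m+1-i)%nat with (S (m+1-S i)) by lia. apply walkS with (Vv (S i)).
    + apply adjT; simpl; lia.
    + apply IHd; lia.
Qed.

Lemma walk_a m : (1 <= m)%nat -> walk m Va Vb (m+1).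
Proof.
  intro Hm. replace (m+1)%nat with (S (m+1-1)) by lia. apply walkS with (Vv 1).
  - apply adjT; simpl; lia.
  - apply (walk_v m (m-1)); lia.
Qed.

Lemma walk_s m i : (1 <= m)%nat -> (1 <= i <= m)%nat -> walk m (Vs i) Vb (m+1+i).
Proof.
  intro Hm. induction i; intro Hi; [lia|].
  replace (m+1+S i)%nat with (S (m+1+i)) by lia.
  destruct (Nat.eq_dec i 0).
  - subst. apply walkS with Va; [apply adjT; simpl; lia|].
    replace (m+1+0)%nat with (m+1)%nat by lia. apply walk_a; auto.
  - apply walkS with (Vs i); [apply adjT; simpl; lia|]. apply IHi; lia.
Qed.

Lemma geo_D m x y k : (1 <= m)%nat -> geodesic_step m x y -> walk m x Vb k ->
  Adj m x y /\ (D m y < k)%nat.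
Proof.
  intros Hm [Ha Hw] W. split; [apply adjb_Adj; auto|].
  destruct (Hw k W) as [k' [W' Hk']]. apply walk_D in W'; auto. lia.
Qed.

Lemma nxt_a m nxt : (1 <= m)%nat -> geodesic_step m Va (nxt Va) -> nxt Va = Vv 1.
Proof.
  intros Hm G. destruct (geo_D m _ _ _ Hm G (walk_a m Hm)) as [HA HD].
  destruct (nxt Va); simpl in HA, HD; try contradiction; try lia.
  f_equal; lia.
Qed.

Lemma nxt_s m nxt i : (1 <= m)%nat -> (1 <= i <= m)%nat -> geodesic_step m (Vs i) (nxt (Vs i)) ->
  nxt (Vs i) = (if Nat.eqb i 1 then Va else Vs (i-1)).
Proof.
  intros Hm Hi G. destruct (geo_D m _ _ _ Hm G (walk_s m i Hm Hi)) as [HA HD].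
  dspec; destruct (nxt (Vs i)); simpl in HA, HD; try contradiction; try lia;
  try reflexivity; f_equal; lia.
Qed.

Definition Vp (m:nat) : list vtx := filter (fun x => negb (veqb x Vb)) (verts m).

Lemma in_Vp m x : In x (Vp m) <-> In x (verts m) /\ x <> Vb.
Proof.
  unfold Vp. rewrite filter_In. split.
  - intros [H1 H2]. split; auto. intro; subst. simpl in H2. discriminate.
  - intros [H1 H2]. split; auto. destruct (veqb x Vb) eqn:E; auto.
    apply veqb_eq in E. contradiction.
Qed.

Lemma filter_all {A} (p : A -> bool) l : (forall x, In x l -> p x = true) -> filter p l = l.
Proof. induction l; simpl; intro H; auto. rewrite H; auto. f_equal; auto. Qed.

Lemma split_b m (F : vtx -> R) : sumR (map F (verts m)) = F Vb + sumR (map F (Vp m)).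
Proof.
  pose proof (verts_NoDup m) as ND. unfold Vp. unfold verts in *.
  set (rest := map Vv (seq 1 m) ++ map Vs (seq 1 m) ++
     flat_map (fun i => map (Vr i) (seq 1 (2 * m + 1))) (seq 1 m)) in *.
  inversion ND; subst. inversion H2; subst.
  simpl. rewrite filter_all.
  - ring.
  - intros x Hx. destruct (veqb x Vb) eqn:E; auto. apply veqb_eq in E. subst. contradiction.
Qed.

Lemma trans_nonneg m nxt x y : 0 <= trans m nxt x y.
Proof.
  unfold trans. destruct (excited x); [destruct (veqb (nxt x) y); lra|].
  destruct (adjb m x y); [|lra].
  destruct (length (nbrs m x)) eqn:E.
  - simpl. rewrite Rinv_0. lra.
  - left. apply Rinv_0_lt_compat. apply lt_0_INR. lia.
Qed.

Lemma killed_S m nxt n y : killed m nxt (S n) y =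
  sumR (map (fun x => killed m nxt n x * trans m nxt x y) (Vp m)).
Proof. reflexivity. Qed.

Lemma killed_nonneg m nxt n y : 0 <= killed m nxt n y.
Proof.
  revert y. induction n; intro y.
  - simpl. destruct (veqb y (Vv 1)); lra.
  - rewrite killed_S. apply sumR_nonneg. intros x _. apply Rmult_le_pos; auto. apply trans_nonneg.
Qed.

Lemma sumR_mult_r {A} (f : A -> R) c l :
  sumR (map f l) * c = sumR (map (fun x => f x * c) l).
Proof. induction l; simpl; [ring|rewrite <- IHl; ring]. Qed.

Lemma transfer m nxt n f :
  sumR (map (fun y => killed m nxt (S n) y * f y) (verts m)) =
  sumR (map (fun x => killed m nxt n x * Pop m nxt f x) (Vp m)).
Proof.
  rewrite (sumR_ext _ (fun y => sumR (map (fun x => killed m nxt n x * trans m nxt x y * f y) (Vp m)))).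
  - rewrite sumR_swap. apply sumR_ext. intros x _. unfold Pop.
    rewrite <- sumR_mult_l. apply sumR_ext. intros; ring.
  - intros y _. rewrite killed_S, sumR_mult_r. reflexivity.
Qed.

Definition qq m nxt n := sumR (map (killed m nxt n) (Vp m)).
Definition Phi m nxt f n := sumR (map (fun y => killed m nxt n y * f y) (Vp m)).

Lemma Phi_step_lo m nxt f n : f Vb = 0 ->
  (forall x, In x (Vp m) -> f x - 1 <= Pop m nxt f x) ->
  Phi m nxt f n - qq m nxt n <= Phi m nxt f (S n).
Proof.
  intros Hb Hf. unfold Phi, qq.
  assert (E : sumR (map (fun y => killed m nxt (S n) y * f y) (Vp m)) =
              sumR (map (fun y => killed m nxt (S n) y * f y) (verts m))).
  { rewrite split_b, Hb. ring. }
  rewrite E, transfer.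
  apply Rle_trans with (sumR (map (fun x => killed m nxt n x * f x + (-1) * killed m nxt n x) (Vp m))).
  - rewrite sumR_plus, sumR_mult_l. lra.
  - apply sumR_le. intros x Hx. pose proof (killed_nonneg m nxt n x).
    pose proof (Hf x Hx). nra.
Qed.

Lemma Phi_step_up m nxt f n : f Vb = 0 ->
  (forall x, In x (Vp m) -> Pop m nxt f x <= f x - 1) ->
  Phi m nxt f (S n) <= Phi m nxt f n - qq m nxt n.
Proof.
  intros Hb Hf. unfold Phi, qq.
  assert (E : sumR (map (fun y => killed m nxt (S n) y * f y) (Vp m)) =
              sumR (map (fun y => killed m nxt (S n) y * f y) (verts m))).
  { rewrite split_b, Hb. ring. }
  rewrite E, transfer.
  apply Rle_trans with (sumR (map (fun x => killed m nxt n x * f x + (-1) * killed m nxt n x) (Vp m))).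
  - apply sumR_le. intros x Hx. pose proof (killed_nonneg m nxt n x).
    pose proof (Hf x Hx). nra.
  - rewrite sumR_plus, sumR_mult_l. lra.
Qed.

Lemma mass m nxt n : (forall x, In x (Vp m) -> Pop m nxt (fun _ => 1) x = 1) ->
  hit_prob m nxt (S n) + qq m nxt (S n) = qq m nxt n.
Proof.
  intro H. unfold hit_prob, qq.
  pose proof (transfer m nxt n (fun _ => 1)) as T.
  rewrite split_b in T. rewrite Rmult_1_r in T.
  rewrite (sumR_ext (fun y => killed m nxt (S n) y * 1) (killed m nxt (S n))) in T
    by (intros; ring).
  rewrite T. apply sumR_ext. intros x Hx. rewrite H; auto. ring.
Qed.

Lemma Phi0 m nxt f : (1 <= m)%nat -> f Vb = 0 -> Phi m nxt f 0 = f (Vv 1).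
Proof.
  intros Hm Hb. unfold Phi.
  assert (E : sumR (map (fun y => killed m nxt 0 y * f y) (Vp m)) =
              sumR (map (fun y => killed m nxt 0 y * f y) (verts m))).
  { rewrite split_b, Hb. ring. }
  rewrite E.
  rewrite (sumR_ext _ (fun y => if veqb y (Vv 1) then f y else 0)).
  - destruct (SL (fun y => veqb y (Vv 1)) f (verts m) [Vv 1] (verts_NoDup m)) as [H1 _].
    + constructor; [simpl; tauto|constructor].
    + intro y. rewrite veqb_eq. simpl. split; [intros [_ ->]; auto|].
      intros [<-|[]]. split; auto. apply in_verts. simpl. lia.
    + rewrite H1. simpl. ring.
  - intros y _. simpl. destruct (veqb y (Vv 1)); ring.
Qed.

Lemma nxt_in m nxt x : (1 <= m)%nat -> geodesic_step m x (nxt x) -> In (nxt x) (verts m).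
Proof.
  intros Hm [Ha _]. apply adjb_Adj in Ha; auto. apply in_verts. eapply Adj_valid; eauto.
Qed.

Lemma Pop_a m nxt f : (1 <= m)%nat ->
  (forall x, In x (verts m) -> x <> Vb -> geodesic_step m x (nxt x)) ->
  Pop m nxt f Va = f (Vv 1).
Proof.
  intros Hm Hn. assert (G : geodesic_step m Va (nxt Va)) by (apply Hn; [apply in_verts; simpl; auto|discriminate]).
  rewrite Pop_exc; auto; [|apply (nxt_in m); auto]. rewrite (nxt_a m); auto.
Qed.

Lemma Pop_s m nxt f i : (1 <= m)%nat -> (1 <= i <= m)%nat ->
  (forall x, In x (verts m) -> x <> Vb -> geodesic_step m x (nxt x)) ->
  Pop m nxt f (Vs i) = f (if Nat.eqb i 1 then Va else Vs (i-1)).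
Proof.
  intros Hm Hi Hn. assert (G : geodesic_step m (Vs i) (nxt (Vs i))) by (apply Hn; [apply in_verts; simpl; auto|discriminate]).
  rewrite Pop_exc; auto; [|apply (nxt_in m); auto]. rewrite (nxt_s m); auto.
Qed.

Lemma Pop_v m nxt f i : (1 <= m)%nat -> (1 <= i <= m)%nat ->
  Pop m nxt f (Vv i) = (f (prevV i) + f (nextV m i) + f (Vr i (2*m+1))) / 3.
Proof.
  intros Hm Hi. rewrite (Pop_unexc m nxt f (Vv i) (Nv m i)); auto.
  - unfold Nv, sumR. simpl. lra.
  - apply Nv_NoDup; auto.
  - intro y. apply nbr_v; auto.
Qed.

Lemma Pop_r m nxt f i j : (1 <= m)%nat -> (1 <= i <= m)%nat -> (1 <= j <= 2*m+1)%nat ->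
  Pop m nxt f (Vr i j) = (f (prevR i j) + f (nextR m i j)) / 2.
Proof.
  intros Hm Hi Hj. rewrite (Pop_unexc m nxt f (Vr i j) (Nr m i j)); auto.
  - unfold Nr, sumR. simpl. lra.
  - apply Nr_NoDup; auto.
  - intro y. apply nbr_r; auto.
Qed.

Lemma Vp_cases m x : In x (Vp m) ->
  x = Va \/ (exists i, x = Vv i /\ (1 <= i <= m)%nat) \/ (exists i, x = Vs i /\ (1 <= i <= m)%nat)
  \/ (exists i j, x = Vr i j /\ (1 <= i <= m)%nat /\ (1 <= j <= 2*m+1)%nat).
Proof.
  intro H. apply in_Vp in H. destruct H as [H1 H2]. apply in_verts in H1.
  destruct x; simpl in H1.
  - left; auto.
  - contradiction.
  - right; left; eauto.
  - right; right; left; eauto.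
  - right; right; right; exists i, j; auto.
Qed.

Lemma Pop_one m nxt x : (1 <= m)%nat ->
  (forall x, In x (verts m) -> x <> Vb -> geodesic_step m x (nxt x)) ->
  In x (Vp m) -> Pop m nxt (fun _ => 1) x = 1.
Proof.
  intros Hm Hn Hx. destruct (Vp_cases m x Hx) as [->|[[i [-> Hi]]|[[i [-> Hi]]|[i [j [-> [Hi Hj]]]]]]].
  - rewrite Pop_a; auto.
  - rewrite Pop_v; auto. lra.
  - rewrite Pop_s; auto.
  - rewrite Pop_r; auto. lra.
Qed.

Lemma bernoulli th n : 0 <= th -> 1 + INR n * th <= (1 + th) ^ n.
Proof.
  intro H. induction n.
  - simpl. lra.
  - rewrite S_INR. simpl. pose proof (pos_INR n).
    assert (th * (1 + INR n * th) <= th * (1 + th) ^ n) by (apply Rmult_le_compat_l; lra).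
    assert (0 <= INR n * th * th) by (apply Rmult_le_pos; [apply Rmult_le_pos|]; lra).
    nra.
Qed.

Lemma tail_small a b rho eps : 0 <= rho < 1 -> 0 <= a -> 0 <= b -> 0 < eps ->
  exists N, (a + b * INR N) * rho ^ N < eps.
Proof.
  intros Hr Ha Hb He.
  set (s := (1 + rho) / 2). set (th := (1 - s) / s).
  assert (Hs : 1/2 <= s < 1) by (unfold s; lra).
  assert (Hth : 0 < th) by (unfold th; apply Rdiv_lt_0_compat; lra).
  assert (Hst : s * (1 + th) = 1) by (unfold th; field; lra).
  assert (Hbound : forall N, INR N * s ^ N <= / th).
  { intro N. pose proof (bernoulli th N (Rlt_le _ _ Hth)) as B.
    assert (E : s ^ N * (1 + th) ^ N = 1) by (rewrite <- Rpow_mult_distr, Hst; apply pow1).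
    assert (0 <= s ^ N) by (apply pow_le; lra).
    apply Rmult_le_reg_l with th; auto. rewrite Rinv_r by lra.
    pose proof (pos_INR N).
    assert (s ^ N * (1 + INR N * th) <= s ^ N * (1 + th) ^ N) by (apply Rmult_le_compat_l; lra).
    nra. }
  assert (Hs1 : forall N, s ^ N <= 1).
  { intro N. induction N; simpl; [lra|]. assert (0 <= s ^ N) by (apply pow_le; lra). nra. }
  assert (Hrs : forall N, rho ^ N <= s ^ N * s ^ N).
  { intro N. rewrite <- Rpow_mult_distr. apply pow_incr. unfold s. nra. }
  set (C := a + b / th + 1).
  assert (HC : 0 < C) by (unfold C; assert (0 <= b/th) by (unfold Rdiv; apply Rmult_le_pos; [lra|left; apply Rinv_0_lt_compat; lra]); lra).
  destruct (pow_lt_1_zero s ltac:(rewrite Rabs_right; lra) (eps / C) ltac:(apply Rdiv_lt_0_compat; lra))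
    as [N HN].
  exists N. specialize (HN N (Nat.le_refl N)). rewrite Rabs_right in HN by (apply Rle_ge, pow_le; lra).
  specialize (Hbound N). specialize (Hs1 N). specialize (Hrs N).
  assert (0 <= s ^ N) by (apply pow_le; lra). pose proof (pos_INR N).
  assert (0 <= rho ^ N) by (apply pow_le; lra).
  apply Rle_lt_trans with (C * s ^ N).
  - unfold C. assert (E1 : b * (INR N * s ^ N) <= b / th) by (unfold Rdiv; apply Rmult_le_compat_l; lra).
    assert (E2 : rho ^ N <= s ^ N) by nra.
    assert (E3 : a * rho ^ N <= a * s ^ N) by (apply Rmult_le_compat_l; nra).
    assert (E4 : b * INR N * rho ^ N <= b * (INR N * s ^ N) * s ^ N).
    { replace (b * (INR N * s ^ N) * s ^ N) with (b * INR N * (s ^ N * s ^ N)) by ring.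
      apply Rmult_le_compat_l; [apply Rmult_le_pos|]; lra. }
    assert (E5 : b * (INR N * s ^ N) * s ^ N <= b / th * s ^ N) by (apply Rmult_le_compat_r; lra).
    nra.
  - apply Rmult_lt_reg_l with (/ C). apply Rinv_0_lt_compat; lra.
    replace (/ C * (C * s ^ N)) with (s ^ N) by (field; lra).
    replace (/ C * eps) with (eps / C) by (unfold Rdiv; ring). lra.
Qed.

Fixpoint Qs m nxt N : R :=
  match N with O => 0 | S N' => Qs m nxt N' + qq m nxt N' end.

Lemma abstract_main m nxt (h G : vtx -> R) K Gm c : (1 <= m)%nat ->
  (forall x, In x (verts m) -> x <> Vb -> geodesic_step m x (nxt x)) ->
  h Vb = 0 -> G Vb = 0 ->
  (forall x, In x (Vp m) -> h x - 1 <= Pop m nxt h x) ->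
  (forall x, In x (Vp m) -> Pop m nxt G x <= G x - 1) ->
  (forall x, In x (Vp m) -> h x <= K) -> 0 <= K ->
  (forall x, In x (verts m) -> 0 <= G x <= Gm) -> 1 < Gm ->
  c <= h (Vv 1) -> hitting_time_ge m nxt c.
Proof.
  intros Hm Hn Hhb HGb Hh HG HhK HK HG0 HGm Hc.
  assert (Hmass : forall n, hit_prob m nxt (S n) + qq m nxt (S n) = qq m nxt n).
  { intro n. apply mass. intros; apply Pop_one; auto. }
  assert (Hq0 : forall n, 0 <= qq m nxt n).
  { intro n. unfold qq. apply sumR_nonneg. intros; apply killed_nonneg. }
  assert (Hi : forall N, h (Vv 1) - Qs m nxt N <= Phi m nxt h N).
  { induction N; simpl.
    - rewrite Phi0; auto. lra.
    - pose proof (Phi_step_lo m nxt h N Hhb Hh). lra. }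
  assert (Hii : forall N, Phi m nxt h N <= K * qq m nxt N).
  { intro N. unfold Phi, qq. rewrite <- sumR_mult_l. apply sumR_le.
    intros x Hx. pose proof (killed_nonneg m nxt N x). pose proof (HhK x Hx). nra. }
  assert (Hiii : forall N, hit_partial m nxt N = Qs m nxt N - INR N * qq m nxt N).
  { induction N.
    - unfold hit_partial. simpl. ring.
    - unfold hit_partial in *. simpl sum_f_R0. rewrite IHN. simpl Qs.
      pose proof (Hmass N). rewrite S_INR.
      replace (hit_prob m nxt (S N)) with (qq m nxt N - qq m nxt (S N)) by lra.
      destruct N; simpl INR; ring. }
  assert (HGp : forall x, In x (Vp m) -> 1 <= G x).
  { intros x Hx. pose proof (HG x Hx).
    assert (0 <= Pop m nxt G x).
    { unfold Pop. apply sumR_nonneg. intros y Hy. apply Rmult_le_pos; [apply trans_nonneg|].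
      apply HG0; auto. }
    lra. }
  set (rho := 1 - / Gm).
  assert (Hrho : 0 <= rho < 1).
  { unfold rho. assert (0 < / Gm < 1).
    { split; [apply Rinv_0_lt_compat; lra|]. rewrite <- Rinv_1. apply Rinv_lt_contravar; lra. }
    lra. }
  assert (Hqle : forall N, qq m nxt N <= Phi m nxt G N).
  { intro N. unfold Phi, qq. apply sumR_le. intros x Hx.
    pose proof (killed_nonneg m nxt N x). pose proof (HGp x Hx). nra. }
  assert (HPhiG : forall N, Phi m nxt G N <= Gm * qq m nxt N).
  { intro N. unfold Phi, qq. rewrite <- sumR_mult_l. apply sumR_le.
    intros x Hx. pose proof (killed_nonneg m nxt N x).
    assert (G x <= Gm) by (apply HG0; apply in_Vp in Hx; tauto). nra. }
  assert (Hiv : forall N, Phi m nxt G N <= Gm * rho ^ N).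
  { induction N.
    - rewrite Phi0; auto. simpl. rewrite Rmult_1_r. apply HG0. apply in_verts. simpl. lia.
    - pose proof (Phi_step_up m nxt G N HGb HG). pose proof (HPhiG N).
      assert (qq m nxt N >= Phi m nxt G N / Gm).
      { apply Rle_ge. apply Rmult_le_reg_l with Gm; [lra|].
        replace (Gm * (Phi m nxt G N / Gm)) with (Phi m nxt G N) by (field; lra). lra. }
      assert (Phi m nxt G (S N) <= rho * Phi m nxt G N).
      { unfold rho. unfold Rdiv in *. lra. }
      simpl. assert (0 <= rho) by lra. nra. }
  intros c' Hc'.
  destruct (tail_small (K * Gm) Gm rho (h (Vv 1) - c') Hrho ltac:(nra) ltac:(lra) ltac:(lra))
    as [N HN].
  exists N. rewrite Hiii.
  specialize (Hi N). specialize (Hii N). specialize (Hqle N). specialize (Hiv N).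
  assert (Hq : qq m nxt N <= Gm * rho ^ N) by lra.
  pose proof (pos_INR N).
  assert ((K + INR N) * qq m nxt N <= (K + INR N) * (Gm * rho ^ N)).
  { apply Rmult_le_compat_l; lra. }
  nra.
Qed.

Definition Lr (m:nat) : R := 2 * INR m + 2.
Definition Bc m := Lr m * (Lr m + 2).
Definition psi m (i:nat) := Bc m * (2 ^ i - 1).
Definition Yc m := psi m (S m).
Definition Fr m (i:nat) (t:R) := (1 - t / Lr m) * (Yc m + INR i) + (t / Lr m) * (Yc m - psi m i) + t * (Lr m - t).
Definition Gpot (m:nat) (x:vtx) : R :=
  match x with
  | Va => Yc m | Vb => 0 | Vv i => Yc m - psi m i | Vs i => Yc m + INR i
  | Vr i j => Fr m i (INR j)
  end.

Lemma Gpot_r m i j : Gpot m (Vr i j) = Fr m i (INR j).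
Proof. reflexivity. Qed.

Lemma INR_2m1 m : INR (2*m+1) = 2 * INR m + 1.
Proof. rewrite plus_INR, mult_INR. simpl. ring. Qed.

Lemma Lr_ge m : (1 <= m)%nat -> 4 <= Lr m.
Proof. intro H. unfold Lr. apply le_INR in H. simpl in H. lra. Qed.

Lemma pow2_ge1 n : 1 <= 2 ^ n.
Proof. induction n; simpl; lra. Qed.

Lemma pow2_mono a b : (a <= b)%nat -> 2 ^ a <= 2 ^ b.
Proof. intro H. apply Rle_pow; [lra|auto]. Qed.

Lemma G_ineq m nxt x : (1 <= m)%nat ->
  (forall x, In x (verts m) -> x <> Vb -> geodesic_step m x (nxt x)) ->
  In x (Vp m) -> Pop m nxt (Gpot m) x <= Gpot m x - 1.
Proof.
  intros Hm Hn Hx. pose proof (Lr_ge m Hm) as HL.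
  assert (HB : 1 <= Bc m) by (unfold Bc; nra).
  destruct (Vp_cases m x Hx) as [->|[[i [-> Hi]]|[[i [-> Hi]]|[i [j [-> [Hi Hj]]]]]]].
  - rewrite Pop_a; auto. simpl. unfold psi. simpl. lra.
  - rewrite Pop_v; auto. unfold prevV, nextV. rewrite Gpot_r.
    assert (Hp : Gpot m (if Nat.eqb i 1 then Va else Vv (i - 1)) = Yc m - psi m (i-1)).
    { destruct (Nat.eqb_spec i 1); simpl; auto. subst. unfold psi. simpl. ring. }
    assert (Hnx : Gpot m (if Nat.eqb i m then Vb else Vv (S i)) = Yc m - psi m (S i)).
    { destruct (Nat.eqb_spec i m); simpl; auto. subst. unfold Yc. ring. }
    rewrite Hp, Hnx. rewrite INR_2m1. change (Gpot m (Vv i)) with (Yc m - psi m i).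
    destruct i as [|k]; [lia|]. replace (S k - 1)%nat with k by lia.
    unfold Fr, psi. simpl pow. set (P := 2 ^ k). assert (1 <= P) by apply pow2_ge1.
    assert (Hi2 : INR (S k) <= Lr m) by (unfold Lr; assert (H' : (S k <= m)%nat) by lia; apply le_INR in H'; pose proof (pos_INR m); lra).
    assert (Hi0 : 0 <= INR (S k)) by apply pos_INR.
    assert (E : 2 * INR m + 1 = Lr m - 1) by (unfold Lr; ring).
    rewrite E.
    assert (Key : 3 * (Yc m - Bc m * (2 * P - 1) - 1) -
      (Yc m - Bc m * (P - 1) + (Yc m - Bc m * (2 * (2 * P) - 1)) +
       ((1 - (Lr m - 1) / Lr m) * (Yc m + INR (S k)) + (Lr m - 1) / Lr m * (Yc m - Bc m * (2 * P - 1)) +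
        (Lr m - 1) * (Lr m - (Lr m - 1))))
      = (Lr m * Lr m - 4) * P - INR (S k) / Lr m).
    { unfold Bc. field. lra. }
    assert (INR (S k) / Lr m <= 1).
    { apply Rmult_le_reg_l with (Lr m); [lra|]. field_simplify; lra. }
    assert (12 <= (Lr m * Lr m - 4) * P) by nra.
    lra.
  - rewrite Pop_s; auto. destruct (Nat.eqb_spec i 1); simpl.
    + subst. simpl. lra.
    + rewrite minus_INR by lia. simpl. lra.
  - rewrite Pop_r; auto. unfold prevR, nextR.
    assert (Hp : Gpot m (if Nat.eqb j 1 then Vs i else Vr i (j - 1)) = Fr m i (INR j - 1)).
    { destruct (Nat.eqb_spec j 1).
      - subst. change (Gpot m (Vs i)) with (Yc m + INR i). unfold Fr. simpl INR. replace (1 - 1) with 0 by ring. unfold Rdiv. ring.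
      - rewrite Gpot_r, minus_INR by lia. reflexivity. }
    assert (Hnx : Gpot m (if Nat.eqb j (2*m+1) then Vv i else Vr i (S j)) = Fr m i (INR j + 1)).
    { destruct (Nat.eqb_spec j (2*m+1)).
      - subst. change (Gpot m (Vv i)) with (Yc m - psi m i). rewrite INR_2m1. unfold Fr. replace (2 * INR m + 1 + 1) with (Lr m) by (unfold Lr; ring).
        field. lra.
      - rewrite Gpot_r, S_INR. reflexivity. }
    rewrite Hp, Hnx, Gpot_r. unfold Fr. apply Req_le. field. lra.
Qed.

Definition Gm m := Yc m + INR m + Lr m * Lr m + 1.

Lemma psi_bounds m i : (i <= S m)%nat -> 0 <= psi m i <= Yc m.
Proof.
  intro H. unfold Yc, psi, Bc. pose proof (pos_INR m). unfold Lr.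
  assert (1 <= 2 ^ i) by apply pow2_ge1. assert (2 ^ i <= 2 ^ S m) by (apply pow2_mono; auto).
  assert (0 <= (2 * INR m + 2) * (2 * INR m + 2 + 2)) by nra.
  split; nra.
Qed.

Lemma G_bounds m x : (1 <= m)%nat -> In x (verts m) -> 0 <= Gpot m x <= Gm m.
Proof.
  intros Hm Hx. apply in_verts in Hx. pose proof (Lr_ge m Hm) as HL.
  pose proof (psi_bounds m (S m) (Nat.le_refl _)) as [HY0 HY1].
  unfold Gm. pose proof (pos_INR m).
  destruct x; simpl in Hx; simpl Gpot.
  - nra.
  - nra.
  - pose proof (psi_bounds m i ltac:(lia)). nra.
  - assert (INR i <= INR m) by (apply le_INR; lia). pose proof (pos_INR i). nra.
  - destruct Hx as [Hi Hj].
    pose proof (psi_bounds m i ltac:(lia)).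
    assert (INR i <= INR m) by (apply le_INR; lia). pose proof (pos_INR i).
    assert (Ht : 0 <= INR j <= Lr m).
    { split; [apply pos_INR|]. assert (INR j <= INR (2*m+1)) by (apply le_INR; lia).
      rewrite INR_2m1 in H3. unfold Lr. lra. }
    unfold Fr. set (a := INR j / Lr m).
    assert (Ha : 0 <= a <= 1).
    { unfold a. split.
      - unfold Rdiv. apply Rmult_le_pos; [lra|]. left; apply Rinv_0_lt_compat; lra.
      - apply Rmult_le_reg_l with (Lr m); [lra|]. unfold Rdiv. field_simplify; lra. }
    assert (0 <= INR j * (Lr m - INR j) <= Lr m * Lr m) by nra.
    split; nra.
Qed.

Definition rr (m:nat) : R := 1 + / (2 * sqrt (INR m + 1)).
Definition wf m (i:nat) : R := rr m ^ i + / rr m ^ i - 2.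
Definition Ag m := / wf m (S m).
Definition cw m := wf m 1.
Definition Kc m := / (Ag m * cw m).
Definition gpot (m:nat) (x:vtx) : R :=
  match x with
  | Va => 0 | Vb => 1 | Vv i => Ag m * wf m i | Vs _ => 0
  | Vr i j => Ag m * wf m i * INR j / Lr m
  end.
Definition hpot m x := Kc m * (1 - gpot m x).

Lemma sqrt_m1 m : 1 <= sqrt (INR m + 1).
Proof.
  pattern 1 at 1; rewrite <- sqrt_1. apply sqrt_le_1_alt. pose proof (pos_INR m). lra.
Qed.

Lemma rr_bounds m : 1 < rr m <= 3/2.
Proof.
  unfold rr. pose proof (sqrt_m1 m).
  assert (0 < / (2 * sqrt (INR m + 1))) by (apply Rinv_0_lt_compat; lra).
  assert (/ (2 * sqrt (INR m + 1)) <= 1/2).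
  { apply Rmult_le_reg_l with (2 * sqrt (INR m + 1)); [lra|]. rewrite Rinv_r by lra. lra. }
  lra.
Qed.

Lemma wf_form m i : wf m i = (rr m ^ i - 1) ^ 2 / rr m ^ i.
Proof.
  unfold wf. pose proof (rr_bounds m). assert (0 < rr m ^ i) by (apply pow_lt; lra).
  field. lra.
Qed.

Lemma wf_nonneg m i : 0 <= wf m i.
Proof.
  rewrite wf_form. pose proof (rr_bounds m). assert (0 < rr m ^ i) by (apply pow_lt; lra).
  unfold Rdiv. apply Rmult_le_pos; [apply pow2_ge_0|left; apply Rinv_0_lt_compat; lra].
Qed.

Lemma pow_gt1 x n : 1 < x -> 1 < x ^ S n.
Proof.
  intro H. induction n; simpl in *; [lra|]. nra.
Qed.

Lemma wf_pos m i : 0 < wf m (S i).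
Proof.
  rewrite wf_form. pose proof (rr_bounds m). pose proof (pow_gt1 (rr m) i ltac:(lra)).
  unfold Rdiv. apply Rmult_lt_0_compat; [|apply Rinv_0_lt_compat; lra].
  apply pow_lt. lra.
Qed.

Lemma rr_pos m : 0 < rr m.
Proof. pose proof (rr_bounds m). lra. Qed.

Lemma wf0 m : wf m 0 = 0.
Proof. unfold wf. simpl. rewrite Rinv_1. ring. Qed.

Lemma wf_rec m k : wf m (S (S k)) + wf m k = (2 + cw m) * wf m (S k) + 2 * cw m.
Proof.
  unfold cw, wf. pose proof (rr_pos m). assert (0 < rr m ^ k) by (apply pow_lt; lra).
  simpl. field. split; lra.
Qed.

Lemma cw_pos m : 0 < cw m.
Proof. apply wf_pos. Qed.

Lemma cw_le m : cw m <= / (4 * (INR m + 1)).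
Proof.
  unfold cw. rewrite wf_form. rewrite pow_1. pose proof (rr_bounds m).
  assert (E : (rr m - 1) ^ 2 = / (4 * (INR m + 1))).
  { unfold rr. pose proof (sqrt_m1 m). pose proof (sqrt_sqrt (INR m + 1) ltac:(pose proof (pos_INR m); lra)).
    replace (1 + / (2 * sqrt (INR m + 1)) - 1) with (/ (2 * sqrt (INR m + 1))) by ring.
    rewrite <- H1 at 2. field. lra. }
  rewrite <- E. assert (0 <= (rr m - 1) ^ 2) by apply pow2_ge_0.
  apply Rmult_le_reg_l with (rr m); [lra|]. unfold Rdiv. field_simplify; [|lra]. nra.
Qed.

Lemma cw_le_L m : cw m <= / Lr m.
Proof.
  eapply Rle_trans; [apply cw_le|]. unfold Lr. pose proof (pos_INR m).
  apply Rinv_le_contravar; lra.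
Qed.

Lemma KAc m : Kc m * (Ag m * cw m) = 1.
Proof.
  unfold Kc. pose proof (cw_pos m). assert (0 < Ag m) by (unfold Ag; apply Rinv_0_lt_compat, wf_pos).
  field. nra.
Qed.

Lemma Ag_pos m : 0 < Ag m.
Proof. unfold Ag; apply Rinv_0_lt_compat, wf_pos. Qed.

Lemma Kc_pos m : 0 < Kc m.
Proof. unfold Kc. apply Rinv_0_lt_compat. pose proof (cw_pos m). pose proof (Ag_pos m). nra. Qed.

Lemma h_ineq m nxt x : (1 <= m)%nat ->
  (forall x, In x (verts m) -> x <> Vb -> geodesic_step m x (nxt x)) ->
  In x (Vp m) -> hpot m x - 1 <= Pop m nxt (hpot m) x.
Proof.
  intros Hm Hn Hx. pose proof (Lr_ge m Hm) as HL. pose proof (KAc m) as HK.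
  pose proof (Kc_pos m). pose proof (Ag_pos m). pose proof (cw_pos m).
  destruct (Vp_cases m x Hx) as [->|[[i [-> Hi]]|[[i [-> Hi]]|[i [j [-> [Hi Hj]]]]]]].
  - rewrite Pop_a; auto. unfold hpot. simpl gpot. fold (cw m). lra.
  - rewrite Pop_v; auto. unfold prevV, nextV.
    assert (Hp : gpot m (if Nat.eqb i 1 then Va else Vv (i - 1)) = Ag m * wf m (i-1)).
    { destruct (Nat.eqb_spec i 1); simpl; auto. subst. simpl. rewrite wf0. ring. }
    assert (Hnx : gpot m (if Nat.eqb i m then Vb else Vv (S i)) = Ag m * wf m (S i)).
    { destruct (Nat.eqb_spec i m); simpl; auto. subst. unfold Ag. field. apply Rgt_not_eq, wf_pos. }
    unfold hpot. rewrite Hp, Hnx.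
    change (gpot m (Vr i (2*m+1))) with (Ag m * wf m i * INR (2*m+1) / Lr m).
    change (gpot m (Vv i)) with (Ag m * wf m i).
    rewrite INR_2m1. replace (2 * INR m + 1) with (Lr m - 1) by (unfold Lr; ring).
    destruct i as [|k]; [lia|]. replace (S k - 1)%nat with k by lia.
    pose proof (wf_rec m k) as R. pose proof (wf_nonneg m (S k)). pose proof (cw_le_L m).
    set (w := wf m (S k)) in *.
    assert (EX : Ag m * wf m k + Ag m * wf m (S (S k)) + Ag m * w * (Lr m - 1) / Lr m - 3 * (Ag m * w)
       = Ag m * ((cw m - / Lr m) * w + 2 * cw m)).
    { replace (Ag m * wf m k + Ag m * wf m (S (S k))) with (Ag m * (wf m (S (S k)) + wf m k)) by ring.
      rewrite R. field. lra. }
    assert (Hneg : (cw m - / Lr m) * w <= 0) by nra.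
    assert (HX : Ag m * ((cw m - / Lr m) * w + 2 * cw m) <= 2 * (Ag m * cw m)) by nra.
    assert (Kc m * (Ag m * ((cw m - / Lr m) * w + 2 * cw m)) <= 2).
    { replace 2 with (Kc m * (2 * (Ag m * cw m))) at 2 by lra. apply Rmult_le_compat_l; lra. }
    rewrite <- EX in H4.
    assert (EQ : (Kc m * (1 - Ag m * wf m k) + Kc m * (1 - Ag m * wf m (S (S k))) +
   Kc m * (1 - Ag m * w * (Lr m - 1) / Lr m)) / 3 - (Kc m * (1 - Ag m * w) - 1)
      = 1 - Kc m * (Ag m * wf m k + Ag m * wf m (S (S k)) + Ag m * w * (Lr m - 1) / Lr m - 3 * (Ag m * w)) / 3)
      by (field; lra).
    lra.
  - rewrite Pop_s; auto. unfold hpot. destruct (Nat.eqb_spec i 1); simpl; lra.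
  - rewrite Pop_r; auto. unfold prevR, nextR.
    assert (Hp : gpot m (if Nat.eqb j 1 then Vs i else Vr i (j - 1)) = Ag m * wf m i * (INR j - 1) / Lr m).
    { destruct (Nat.eqb_spec j 1).
      - subst. simpl. unfold Rdiv. ring.
      - change (gpot m (Vr i (j-1))) with (Ag m * wf m i * INR (j-1) / Lr m). rewrite minus_INR by lia. reflexivity. }
    assert (Hnx : gpot m (if Nat.eqb j (2*m+1) then Vv i else Vr i (S j)) = Ag m * wf m i * (INR j + 1) / Lr m).
    { destruct (Nat.eqb_spec j (2*m+1)).
      - subst. change (gpot m (Vv i)) with (Ag m * wf m i). rewrite INR_2m1.
        replace (2 * INR m + 1 + 1) with (Lr m) by (unfold Lr; ring). field. lra.
      - change (gpot m (Vr i (S j))) with (Ag m * wf m i * INR (S j) / Lr m). rewrite S_INR. reflexivity. }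
    unfold hpot. rewrite Hp, Hnx.
    change (gpot m (Vr i j)) with (Ag m * wf m i * INR j / Lr m).
    match goal with |- _ <= ?Rt => assert (Rt = Kc m * (1 - Ag m * wf m i * INR j / Lr m)) by (field; lra) end.
    lra.
Qed.

Lemma h_le_K m x : In x (Vp m) -> hpot m x <= Kc m.
Proof.
  intro Hx. apply in_Vp in Hx. destruct Hx as [Hx Hb]. apply in_verts in Hx.
  unfold hpot. pose proof (Kc_pos m). pose proof (Ag_pos m).
  assert (0 <= gpot m x).
  { destruct x; simpl; try lra; try contradiction.
    - pose proof (wf_nonneg m i). nra.
    - pose proof (wf_nonneg m i). pose proof (pos_INR j). unfold Lr. pose proof (pos_INR m).
      unfold Rdiv. apply Rmult_le_pos; [apply Rmult_le_pos; [apply Rmult_le_pos|]; lra|]. left; apply Rinv_0_lt_compat; lra. }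
  nra.
Qed.

Lemma h_v1 m : hpot m (Vv 1) = Kc m - 1.
Proof. unfold hpot. simpl gpot. fold (cw m). pose proof (KAc m). lra. Qed.

Lemma exp_pow' x n : exp x ^ n = exp (INR n * x).
Proof.
  induction n.
  - simpl. rewrite Rmult_0_l, exp_0. reflexivity.
  - simpl pow. rewrite IHn, S_INR, <- exp_plus. f_equal. ring.
Qed.

Lemma exp_le' a b : a <= b -> exp a <= exp b.
Proof. intro H. destruct (Req_dec a b); [subst; lra|]. left; apply exp_increasing; lra. Qed.

Lemma numeric m : (1 <= m)%nat ->
  exp (sqrt (INR m) / 10) / (Rpower (INR m) (3 / 2) + 1) <= Kc m - 1.
Proof.
  intro Hm. set (M1 := INR m + 1).
  assert (HM1 : 2 <= M1) by (unfold M1; apply le_INR in Hm; simpl in Hm; lra).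
  pose proof (sqrt_m1 m) as Hsq. fold M1 in Hsq.
  assert (Hss : sqrt M1 * sqrt M1 = M1) by (apply sqrt_sqrt; lra).
  set (d := / (2 * sqrt M1)).
  assert (Hd : 0 < d <= 1/2).
  { unfold d. split; [apply Rinv_0_lt_compat; lra|].
    apply Rmult_le_reg_l with (2 * sqrt M1); [lra|]. rewrite Rinv_r by lra. lra. }
  assert (Hrr : rr m = 1 + d) by reflexivity.
  set (s := rr m ^ S m).
  assert (Hs_bern : 1 + sqrt M1 / 2 <= s).
  { unfold s. rewrite Hrr. pose proof (bernoulli d (S m) ltac:(lra)) as B.
    rewrite S_INR in B. fold M1 in B.
    replace (M1 * d) with (sqrt M1 / 2) in B; [lra|].
    unfold d. rewrite <- Hss at 2. field. lra. }
  assert (Hexp : exp (sqrt (INR m) / 10) <= s).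
  { assert (E1 : exp (d / 2) <= 1 + d).
    { pose proof (exp_ineq1_le (- (d / 2))).
      assert (exp (d/2) * exp (- (d/2)) = 1) by (rewrite <- exp_plus; replace (d/2 + - (d/2)) with 0 by ring; apply exp_0).
      pose proof (exp_pos (d/2)). nra. }
    assert (E2 : exp (d / 2) ^ S m <= s).
    { unfold s. rewrite Hrr. apply pow_incr. pose proof (exp_pos (d/2)). lra. }
    rewrite exp_pow', S_INR in E2. fold M1 in E2.
    replace (M1 * (d / 2)) with (sqrt M1 / 4) in E2 by (unfold d; rewrite <- Hss at 2; field; lra).
    eapply Rle_trans; [|exact E2]. apply exp_le'.
    assert (sqrt (INR m) <= sqrt M1) by (apply sqrt_le_1_alt; unfold M1; lra).
    pose proof (sqrt_pos (INR m)). lra. }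
  assert (HP : 1 <= Rpower (INR m) (3/2)).
  { assert (1 <= INR m) by (apply le_INR in Hm; simpl in Hm; lra).
    rewrite <- (Rpower_O (INR m)) by lra. apply Rle_Rpower; lra. }
  set (W := wf m (S m)).
  assert (HW : W * s = (s - 1) ^ 2).
  { unfold W. rewrite wf_form. fold s. assert (0 < s) by (unfold s; apply pow_lt, rr_pos). field. lra. }
  assert (HK : 4 * M1 * W <= Kc m).
  { unfold Kc, Ag. fold W. pose proof (wf_pos m m). fold W in H. pose proof (cw_pos m).
    pose proof (cw_le m). fold M1 in H1.
    assert (4 * M1 <= / cw m).
    { replace (4 * M1) with (/ / (4 * M1)) by (field; lra). apply Rinv_le_contravar; auto. }
    replace (/ (/ W * cw m)) with (W * / cw m) by (field; lra). nra. }
  assert (Hs1 : 1 < s) by (pose proof (sqrt_pos M1); lra).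
  assert (Hmain : s / 2 + 1 <= 4 * M1 * W).
  { apply Rmult_le_reg_l with s; [lra|].
    replace (s * (4 * M1 * W)) with (4 * M1 * (W * s)) by ring. rewrite HW.
    set (u := s - 1). replace s with (1 + u) by (unfold u; ring).
    assert (Hu : sqrt M1 / 2 <= u) by (unfold u; lra).
    assert (Hu2 : M1 / 4 <= u * u).
    { pose proof (sqrt_pos M1). nra. }
    assert (Hu7 : 7/10 <= u) by nra.
    nra. }
  pose proof (exp_pos (sqrt (INR m) / 10)).
  assert (exp (sqrt (INR m) / 10) / (Rpower (INR m) (3 / 2) + 1) <= exp (sqrt (INR m) / 10) / 2).
  { unfold Rdiv. apply Rmult_le_compat_l; [lra|]. apply Rinv_le_contravar; lra. }
  lra.
Qed.

Theorem mainTheorem4 (m : nat) (Hm : (1 <= m)%nat) (nxt : vtx -> vtx)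
  (Hnxt : forall x, In x (verts m) -> x <> Vb -> geodesic_step m x (nxt x)) :
  hitting_time_ge m nxt
    (exp (sqrt (INR m) / 10) / (Rpower (INR m) (3 / 2) + 1)).
Proof.
  apply (abstract_main m nxt (hpot m) (Gpot m) (Kc m) (Gm m)); auto.
  - unfold hpot. simpl. ring.
  - intros x Hx. apply h_ineq; auto.
  - intros x Hx. apply G_ineq; auto.
  - intros x Hx. apply h_le_K; auto.
  - left; apply Kc_pos.
  - intros x Hx. split; apply G_bounds; auto.
  - unfold Gm. pose proof (psi_bounds m (S m) (Nat.le_refl _)). pose proof (pos_INR m).
    pose proof (Lr_ge m Hm). nra.
  - rewrite h_v1. apply numeric; auto.
Qed.
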